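(* For all integers $k\ge 1$ and $t\ge 1$, $$B_0(k,2t-1)+B_1(k+1,2t)=B_0(k,2t-2k-1)+p_{de}(2t-k-1).$$
   Context: For a partition $\pi$, $s(\pi)$ is its smallest part. For $j\ge1$, $\mathrm{Spt}j_{do}(n)$ is the set of partitions $\pi$ of $n$ in which $s(\pi)$ occurs exactly $j$ times and the remaining parts (those larger than $s(\pi)$) are pairwise distinct and each has parity different from that of $s(\pi)$. $B_0(j,n)$ (resp. $B_1(j,n)$) is the number of $\pi\in\mathrm{Spt}j_{do}(n)$ whose number of parts greater than $s(\pi)$ is even (resp. odd); $B_0(j,n)=B_1(j,n)=0$ for $n\le 0$. $p_{de}(n)$ is the number of partitions of $n$ into distinct even parts, with $p_{de}(0)=1$ and $p_{de}(n)=0$ for $n<0$. *)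

(* Defs.v *)
From mathcomp Require Import all_boot all_order all_algebra.
Set Implicit Arguments. Unset Strict Implicit. Unset Printing Implicit Defensive.

(* A partition of n is represented in frequency notation:
   m : {ffun 'I_n -> 'I_n.+1}, where (m i) is the number of times the part
   i+1 occurs (a part of a partition of n is at most n and occurs at most
   n times).  m is a partition of n iff sum_i (i+1) * m i = n. *)
Definition pweight (n : nat) (m : {ffun 'I_n -> 'I_n.+1}) : nat :=
  \sum_(i < n) (i.+1 * m i)%N.

(* pi (= m) is in Spt j_do(n) with smallest part s.+1 (index s):
   the smallest part occurs exactly j times, no smaller part occurs,
   every larger part occurs at most once and has parity different from
   that of the smallest part. *)
Definition spt_do_at (j n : nat) (m : {ffun 'I_n -> 'I_n.+1}) (s : 'I_n) : bool :=
  [&& pweight m == n,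
      nat_of_ord (m s) == j,
      [forall i : 'I_n, (i < s) ==> (nat_of_ord (m i) == 0%N)] &
      [forall i : 'I_n, (s < i) ==>
          ((nat_of_ord (m i) <= 1) &&
           ((nat_of_ord (m i) != 0%N) ==> (odd i.+1 != odd s.+1)))]].

Definition nlarger (n : nat) (m : {ffun 'I_n -> 'I_n.+1}) (s : 'I_n) : nat :=
  \sum_(i < n | s < i) nat_of_ord (m i).

Definition Bnat (b : bool) (j n : nat) : nat :=
  #|[set m : {ffun 'I_n -> 'I_n.+1} |
      [exists s : 'I_n, spt_do_at j m s && (odd (nlarger m s) == b)]]|.

Definition B0 (j : nat) (n : int) : nat :=
  match n with Posz n' => Bnat false j n' | Negz _ => 0%N end.
Definition B1 (j : nat) (n : int) : nat :=
  match n with Posz n' => Bnat true j n' | Negz _ => 0%N end.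

(* partitions of n into distinct even parts: part i+1 even iff i odd *)
Definition pde_nat (n : nat) : nat :=
  #|[set m : {ffun 'I_n -> 'I_n.+1} |
      (pweight m == n) &&
      [forall i : 'I_n, (nat_of_ord (m i) <= 1) &&
                        ((nat_of_ord (m i) != 0%N) ==> odd i)]]|.

Definition pde (n : int) : nat :=
  match n with Posz n' => pde_nat n' | Negz _ => 0%N end.

(* Main.v *)
Require Import Defs.
From mathcomp Require Import all_boot all_order all_algebra.
From mathcomp Require Import zify.
Set Implicit Arguments. Unset Strict Implicit. Unset Printing Implicit Defensive.

Lemma card_bij_in (T U : finType) (A : {set T}) (B : {set U}) (f : T -> U) (g : U -> T) :
  {in A, forall x, f x \in B} -> {in B, forall y, g y \in A} ->
  {in A, cancel f g} -> {in B, cancel g f} -> #|A| = #|B|.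
Proof.
move=> fAB gBA fK gK; apply/eqP; rewrite eqn_leq; apply/andP; split.
  rewrite -(card_in_imset (f := f) (D := A)); last exact: can_in_inj fK.
  apply: subset_leq_card; apply/subsetP=> y /imsetP [x xA ->]; exact: fAB.
rewrite -(card_in_imset (f := g) (D := B)); last exact: can_in_inj gK.
apply: subset_leq_card; apply/subsetP=> y /imsetP [x xA ->]; exact: gBA.
Qed.

Lemma sum_transfer (w N : nat) (hw : w <= N) (P : pred nat) (F : nat -> nat) :
  (forall i, P i -> i < w) -> \sum_(i < w | P i) F i = \sum_(i < N | P i) F i.
Proof.
move=> HP; rewrite (big_ord_widen_cond _ _ _ hw); apply: eq_bigl => i.
by case Pi: (P i) => //=; rewrite HP.
Qed.

Definition natin (N : nat) (S : {set 'I_N}) : pred nat := fun n => [exists x in S, val x == n].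

Lemma natinE N (S : {set 'I_N}) (i : 'I_N) : natin S i = (i \in S).
Proof.
apply/existsP/idP => [[x /andP [xS /eqP Hx]]|iS]; last by exists i; rewrite iS eqxx.
by have <- : x = i by apply: val_inj.
Qed.

Lemma sum_setE N (S : {set 'I_N}) (F : nat -> nat) :
  \sum_(i in S) F i = \sum_(i < N | natin S i) F i.
Proof. by apply: eq_bigl => i; rewrite natinE. Qed.

Lemma sum_transfer2 (w N : nat) (P : pred nat) (F : nat -> nat) :
  (forall i, P i -> i < w) -> (forall i, P i -> i < N) ->
  \sum_(i < w | P i) F i = \sum_(i < N | P i) F i.
Proof.
move=> H1 H2; case: (leqP w N) => h; first exact: sum_transfer.
by symmetry; apply: sum_transfer => //; apply: ltnW.
Qed.

Lemma natin_lt N (S : {set 'I_N}) i : natin S i -> i < N.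
Proof. by case/existsP => x /andP [_ /eqP <-]; apply: ltn_ord. Qed.


Definition goodX (N j : nat) (b : bool) (w : nat) (X : 'I_N * {set 'I_N}) : bool :=
  [&& (X.1.+1 * j + \sum_(i in X.2) i.+1 == w)%N,
      [forall i in X.2, (X.1 < i) && (odd i.+1 != odd X.1.+1)] &
      odd #|X.2| == b].

Definition Tset N j b w := [set X : 'I_N * {set 'I_N} | goodX j b w X].

Definition gX (N w j : nat) (X : 'I_N * {set 'I_N}) : {ffun 'I_w -> 'I_w.+1} :=
  [ffun i : 'I_w => inord (if val i == val X.1 then j else nat_of_bool (natin X.2 i))].

Lemma sum_mulb (w : nat) (F : nat -> nat) (Q : pred nat) :
  \sum_(i < w) F i * Q i = \sum_(i < w | Q i) F i.
Proof. by rewrite [RHS]big_mkcond; apply: eq_bigr => i _; case: (Q i); rewrite ?muln1 ?muln0. Qed.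

Lemma gX_val N w j (X : 'I_N * {set 'I_N}) (i : 'I_w) : j <= w ->
  nat_of_ord (gX w j X i) = if val i == val X.1 then j else nat_of_bool (natin X.2 i).
Proof.
move=> hj; rewrite ffunE inordK //; case: ifP => _ //; case: (natin _ _) => //=.
by case: w i hj => [[]|w'] //.
Qed.

Definition bnd N w (X : 'I_N * {set 'I_N}) := (X.1 < w) && [forall x in X.2, (X.1 < x) && (x < w)].

Lemma natin_bnd N w (X : 'I_N * {set 'I_N}) i : bnd w X -> natin X.2 i -> (X.1 < i) && (i < w).
Proof.
move=> /andP [_ /forall_inP H] /existsP [x /andP [xS /eqP <-]]; exact: H.
Qed.

Lemma gX_weight N w j (X : 'I_N * {set 'I_N}) : j <= w -> bnd w X ->
  pweight (gX w j X) = X.1.+1 * j + \sum_(i in X.2) i.+1.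
Proof.
move=> hj hb; have hs : X.1 < w by case/andP: hb.
rewrite /pweight.
rewrite (eq_bigr (fun i : 'I_w => i.+1 * ((i == X.1 :> nat) * j) + i.+1 * natin X.2 i)); last first.
  move=> i _; rewrite gX_val //; case: eqP => [e|ne].
    have : ~~ natin X.2 i by apply/negP => /(natin_bnd hb); rewrite e ltnn.
    by move/negbTE ->; rewrite muln0 addn0 mul1n.
  by rewrite mul0n muln0.
rewrite big_split /= sum_mulb sum_setE -(sum_transfer2 (w:=w) (N:=N)); last first.
- exact: natin_lt.
- by move=> i /(natin_bnd hb) /andP [].
congr (_ + _).
rewrite (bigD1 (Ordinal hs)) //= eqxx mul1n big1 ?addn0 //.
move=> i ne; suff -> : (val i == val X.1) = false by rewrite mul0n muln0.
by apply/negbTE; apply: contra ne => /eqP e; apply/eqP/val_inj.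
Qed.

Lemma gX_nlarger N w j (X : 'I_N * {set 'I_N}) (s0 : 'I_w) : j <= w -> bnd w X ->
  val s0 = val X.1 -> nlarger (gX w j X) s0 = #|X.2|.
Proof.
move=> hj hb hs0; rewrite /nlarger big_mkcond /=.
rewrite (eq_bigr (fun i : 'I_w => 1 * natin X.2 i)); last first.
  move=> i _; rewrite gX_val // mul1n.
  case: ltnP => h.
    by rewrite ifF //; apply/negbTE; rewrite -hs0 neq_ltn h orbT.
  case Hn: (natin X.2 i) => //.
  by move: (natin_bnd hb Hn) => /andP []; rewrite -hs0 ltnNge h.
rewrite (sum_mulb _ (fun _ => 1)) -sum1_card (sum_setE _ (fun _ => 1)).
apply: (@sum_transfer2 w N (natin X.2) (fun _ => 1)); first by move=> i /(natin_bnd hb) /andP [].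
exact: natin_lt.
Qed.

Lemma spt_unique j w (m : {ffun 'I_w -> 'I_w.+1}) s1 s2 : 0 < j ->
  spt_do_at j m s1 -> spt_do_at j m s2 -> s1 = s2.
Proof.
rewrite /spt_do_at => hj H1 H2.
case/and4P: H1 => _ h1 l1 _.
case/and4P: H2 => _ h2 l2 _.
move/eqP: h1 => h1; move/eqP: h2 => h2.
apply/val_inj; case: (ltngtP s1 s2) => // lt.
  move/forallP: l2 => /(_ s1); rewrite lt /= h1 => /eqP e.
  by rewrite e in hj.
move/forallP: l1 => /(_ s2); rewrite lt /= h2 => /eqP e.
by rewrite e in hj.
Qed.

Lemma elem_le_sum N (S : {set 'I_N}) (x : 'I_N) : x \in S -> x.+1 <= \sum_(i in S) i.+1.
Proof. by move=> xS; rewrite (bigD1 x) //= leq_addr. Qed.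

Lemma good_bnd N j b w (X : 'I_N * {set 'I_N}) : 0 < j -> goodX j b w X ->
  (j <= w) && bnd w X.
Proof.
case: X => s S /= hj /and3P [/eqP hw /forall_inP hS _].
have h1 : s.+1 * j <= w by rewrite -hw leq_addr.
have h2 : j <= w by apply: leq_trans h1; rewrite leq_pmull.
have h3 : s < w by apply: leq_trans h1; rewrite leq_pmulr.
rewrite h2 /bnd /= h3 /=; apply/forall_inP => x xS.
case/andP: (hS x xS) => -> _ /=.
by apply: leq_trans (elem_le_sum xS) _; rewrite -hw leq_addl.
Qed.

Lemma gX_spt N j b w (X : 'I_N * {set 'I_N}) (s0 : 'I_w) : 0 < j -> goodX j b w X ->
  val s0 = val X.1 -> spt_do_at j (gX w j X) s0 && (odd (nlarger (gX w j X) s0) == b).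
Proof.
move=> hj hg hs0; case/andP: (good_bnd hj hg) => hjw hb.
rewrite gX_nlarger //.
case/and3P: hg => /eqP hw /forall_inP hS ->; rewrite andbT.
rewrite /spt_do_at gX_weight // hw eqxx /= gX_val // hs0 eqxx /= eqxx /=.
apply/andP; split; apply/forallP => i; apply/implyP => hi; rewrite gX_val //.
  rewrite ifF; last by apply/negbTE; rewrite neq_ltn -hs0 hi.
  case Hn: (natin X.2 i) => //.
  by move: (natin_bnd hb Hn) => /andP []; rewrite -hs0 => h; move: (ltn_trans h hi); rewrite ltnn.
rewrite ifF; last by apply/negbTE; rewrite neq_ltn -hs0 hi orbT.
case Hn: (natin X.2 i) => //=.
case/existsP: Hn => x /andP [xS /eqP xi].
by case/andP: (hS x xS); rewrite xi -hs0 /=.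
Qed.

Definition Sm (N w : nat) (m : {ffun 'I_w -> 'I_w.+1}) (s : 'I_w) : {set 'I_N} :=
  [set x : 'I_N | [exists i : 'I_w, [&& val i == val x, s < i & nat_of_ord (m i) != 0%N]]].

Definition fX (N' w j : nat) (m : {ffun 'I_w -> 'I_w.+1}) : 'I_N'.+1 * {set 'I_N'.+1} :=
  if [pick s | spt_do_at j m s] is Some s then (inord s, Sm N'.+1 m s) else (ord0, set0).

Lemma fX_eq N' w j (m : {ffun 'I_w -> 'I_w.+1}) s : 0 < j -> spt_do_at j m s ->
  fX N' j m = (inord s, Sm N'.+1 m s).
Proof.
move=> hj hs; rewrite /fX; case: pickP => [s' hs'|]; last by move/(_ s); rewrite hs.
by rewrite (spt_unique hj hs' hs).
Qed.

Lemma natin_Sm N' w (m : {ffun 'I_w -> 'I_w.+1}) s (i : 'I_w) : w <= N'.+1 ->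
  natin (Sm N'.+1 m s) i = (s < i) && (nat_of_ord (m i) != 0%N).
Proof.
move=> hw; apply/existsP/idP.
  case=> x /andP []; rewrite inE => /existsP [i' /and3P [/eqP e1 h1 h2]] /eqP e2.
  have ei : i' = i by apply: val_inj; rewrite /= e1 e2.
  by rewrite -ei h1 h2.
move=> /andP [h1 h2]; have hi : i < N'.+1 by apply: leq_trans hw.
exists (inord i); apply/andP; split; last by rewrite /= inordK.
rewrite inE; apply/existsP; exists i.
by rewrite /= inordK // eqxx h1 h2.
Qed.

Lemma gfX N' w j (m : {ffun 'I_w -> 'I_w.+1}) s : 0 < j -> w <= N'.+1 -> spt_do_at j m s ->
  gX w j (fX N' j m) = m.
Proof.
move=> hj hw hs; rewrite (fX_eq _ hj hs).
have hjw : j <= w by case/and4P: hs => _ /eqP <- _ _; rewrite -ltnS.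
have hsN : s < N'.+1 by apply: leq_trans hw.
apply/ffunP => i; apply/val_inj; rewrite /= gX_val //= inordK //.
case: eqP => [e|ne].
  have -> : i = s by apply: val_inj.
  by case/and4P: hs => _ /eqP -> _ _.
rewrite natin_Sm //.
case/and4P: hs => _ _ /forallP l1 /forallP l2.
case: (ltngtP s i) => h /=.
- move: (l2 i); rewrite h /= => /andP [h1 _].
  by case: (nat_of_ord (m i)) h1 => [|[]].
- by move: (l1 i); rewrite h /= => /eqP ->.
- by case: ne.
Qed.

Lemma Bnat_T N' j b w : 0 < j -> w <= N'.+1 -> Bnat b j w = #|Tset N'.+1 j b w|.
Proof.
move=> hj hw; rewrite /Bnat.
apply: (@card_bij_in _ _ _ _ (fX N' j) (gX w j)).
- move=> m; rewrite inE => /existsP [s /andP [hs hb]].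
  have E := gfX hj hw hs.
  have hjw : j <= w by case/and4P: hs => _ /eqP <- _ _; rewrite -ltnS.
  have hsN : s < N'.+1 by apply: leq_trans hw.
  have hbd : bnd w (fX N' j m).
    rewrite (fX_eq _ hj hs) /bnd /= inordK // ltn_ord /=.
    apply/forall_inP => x; rewrite inE => /existsP [i /and3P [/eqP e1 h1 _]].
    by rewrite -e1 h1 ltn_ord.
  rewrite /Tset inE /goodX; apply/and3P; split.
  + case/and4P: hs => /eqP hpw _ _ _.
    by rewrite -(gX_weight hjw hbd) E hpw.
  + rewrite (fX_eq _ hj hs) /=; apply/forall_inP => x; rewrite inE.
    case/existsP => i /and3P [/eqP e1 h1 h2]; rewrite inordK // -e1 h1 /=.
    case/and4P: hs => _ _ _ /forallP /(_ i); rewrite h1 /= => /andP [_].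
    by rewrite h2.
  + have hs0 : val s = val (fX N' j m).1 by rewrite (fX_eq _ hj hs) /= inordK.
    by rewrite -(gX_nlarger hjw hbd hs0) E.
- move=> X; rewrite /Tset => hg; rewrite in_set in hg; case/andP: (good_bnd hj hg) => hjw /andP [hs _].
  rewrite inE; apply/existsP; exists (Ordinal hs); exact: gX_spt.
- move=> m; rewrite inE => /existsP [s /andP [hs _]]; exact: gfX hj hw hs.
- move=> X; rewrite /Tset => hg; rewrite in_set in hg; case/andP: (good_bnd hj hg) => hjw hbd.
  have hs : X.1 < w by case/andP: hbd.
  have hsp : spt_do_at j (gX w j X) (Ordinal hs) by case/andP: (gX_spt (s0 := Ordinal hs) hj hg erefl).
  rewrite (fX_eq _ hj hsp); case: X hg hjw hbd hs hsp => s S hg hjw hbd hs hsp /=.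
  have -> : inord s = s by apply: val_inj; rewrite /= inordK.
  congr (_, _); apply/setP => x; rewrite inE.
  apply/existsP/idP.
  + case=> i /and3P [/eqP e1 h1 h2].
    move: h2; rewrite gX_val //= ifF; last by apply/negbTE; rewrite neq_ltn h1 orbT.
    case Hn: (natin S i) => // _.
    by move: Hn; rewrite e1 natinE.
  + move=> xS; have hx : x < w by case/andP: hbd => _ /forall_inP /(_ x xS) /andP [].
    exists (Ordinal hx); rewrite /= eqxx /=.
    case/andP: hbd => _ /forall_inP /(_ x xS) /andP [-> _] /=.
    rewrite gX_val //= ifF; last by apply/negbTE; rewrite neq_ltn; case/and3P: (hg) => _ /forall_inP /(_ x xS) /andP [-> _] _; rewrite orbT.
    by rewrite natinE xS.
Qed.


Definition Pset N w := [set S : {set 'I_N} | (\sum_(i in S) i.+1 == w) && [forall i in S, odd i]].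

Definition gP (N w : nat) (S : {set 'I_N}) : {ffun 'I_w -> 'I_w.+1} :=
  [ffun i : 'I_w => inord (nat_of_bool (natin S i))].

Definition fP (N' w : nat) (m : {ffun 'I_w -> 'I_w.+1}) : {set 'I_N'.+1} :=
  [set x : 'I_N'.+1 | [exists i : 'I_w, (val i == val x) && (nat_of_ord (m i) != 0%N)]].

Lemma gP_val N w (S : {set 'I_N}) (i : 'I_w) : nat_of_ord (gP w S i) = natin S i.
Proof. by rewrite ffunE inordK //; case: (natin _ _) => //; case: w i => [[]|]. Qed.

Lemma gP_weight N w (S : {set 'I_N}) : (forall x, x \in S -> x < w) ->
  pweight (gP w S) = \sum_(i in S) i.+1.
Proof.
move=> hS; rewrite /pweight (eq_bigr (fun i : 'I_w => i.+1 * natin S i)); last first.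
  by move=> i _; rewrite gP_val.
rewrite sum_mulb sum_setE; apply: sum_transfer2; last exact: natin_lt.
by move=> i /existsP [x /andP [xS /eqP <-]]; apply: hS.
Qed.

Lemma natin_fP N' w (m : {ffun 'I_w -> 'I_w.+1}) (i : 'I_w) : w <= N'.+1 ->
  natin (fP N' m) i = (nat_of_ord (m i) != 0%N).
Proof.
move=> hw; apply/existsP/idP.
  case=> x /andP []; rewrite inE => /existsP [i' /andP [/eqP e1 h2]] /eqP e2.
  have ei : i' = i by apply: val_inj; rewrite /= e1 e2.
  by rewrite -ei h2.
move=> h2; have hi : i < N'.+1 by apply: leq_trans hw.
exists (inord i); apply/andP; split; last by rewrite /= inordK.
rewrite inE; apply/existsP; exists i.
by rewrite /= inordK // eqxx h2.
Qed.

Lemma pde_P N' w : w <= N'.+1 -> pde_nat w = #|Pset N'.+1 w|.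
Proof.
move=> hw; rewrite /pde_nat.
apply: (@card_bij_in _ _ _ (Pset N'.+1 w) (@fP N' w) (@gP N'.+1 w)).
- move=> m; rewrite inE => /andP [/eqP hpw /forallP hm].
  have E : gP w (fP N' m) = m.
    apply/ffunP => i; apply/val_inj; rewrite /= gP_val natin_fP //.
    by case/andP: (hm i); case: (nat_of_ord (m i)) => [|[]].
  have hS : forall x, x \in fP N' m -> x < w.
    move=> x; rewrite inE => /existsP [i /andP [/eqP e _]].
    have e' : nat_of_ord i = nat_of_ord x := e.
    by rewrite -e'.
  rewrite /Pset in_set; apply/andP; split.
    by rewrite -(gP_weight hS) E hpw.
  apply/forall_inP => x; rewrite inE => /existsP [i /andP [/eqP e h]].
  by case/andP: (hm i) => _; rewrite h /= -e.
- move=> S; rewrite /Pset => hg; rewrite in_set in hg; case/andP: hg => /eqP hw2 /forall_inP ho.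
  have hS : forall x, x \in S -> x < w.
    by move=> x xS; rewrite -hw2; apply: leq_trans (elem_le_sum xS).
  rewrite inE gP_weight // hw2 eqxx /=; apply/forallP => i; rewrite gP_val.
  case Hn: (natin S i) => //=.
  by case/existsP: Hn => x /andP [xS /eqP <-]; apply: ho.
- move=> m; rewrite inE => /andP [_ /forallP hm].
  apply/ffunP => i; apply/val_inj; rewrite /= gP_val natin_fP //.
  by case/andP: (hm i); case: (nat_of_ord (m i)) => [|[]].
- move=> S; rewrite /Pset => hg; rewrite in_set in hg; case/andP: hg => /eqP hw2 _.
  apply/setP => x; rewrite inE; apply/existsP/idP.
  + case=> i /andP [/eqP e]; rewrite gP_val.
    by case Hn: (natin S i) => // _; move: Hn; rewrite e natinE.
  + move=> xS; have hx : x < w by rewrite -hw2; apply: leq_trans (elem_le_sum xS).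
    by exists (Ordinal hx); rewrite /= eqxx gP_val natinE xS.
Qed.


Lemma sum_par N (S : {set 'I_N}) : (forall i, i \in S -> ~~ odd i) ->
  odd (\sum_(i in S) i.+1) = odd #|S|.
Proof.
move=> h; rewrite (eq_bigr (fun i : 'I_N => i + 1)); last by move=> i _; rewrite addn1.
rewrite big_split /= sum1_card oddD.
have : 2 %| \sum_(i in S) (i : nat) by apply: dvdn_sum => i /h; rewrite dvdn2.
by rewrite dvdn2 => /negbTE ->.
Qed.

Definition fD n (X : 'I_n.+1 * {set 'I_n.+1}) : 'I_n.+1 * {set 'I_n.+1} :=
  if (inord (X.1).+1 : 'I_n.+1) \in X.2 then (inord (X.1).+2, X.2 :\ inord (X.1).+1)
  else (inord (X.1).+2, X.2).

Definition gD n (Y : 'I_n.+1 * {set 'I_n.+1}) : 'I_n.+1 * {set 'I_n.+1} :=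
  if odd #|Y.2| then (inord (Y.1 - 2), inord (Y.1 - 1) |: Y.2) else (inord (Y.1 - 2), Y.2).

Lemma memT N j b w (X : 'I_N * {set 'I_N}) : (X \in Tset N j b w) = goodX j b w X.
Proof. by rewrite in_set. Qed.

Definition Dset n k := ((Tset n.+1 k false n :|: Tset n.+1 k.+1 true n.+1)
   :\: [set X : 'I_n.+1 * {set 'I_n.+1} | val X.1 == 0%N])
   :\: [set X : 'I_n.+1 * {set 'I_n.+1} | val X.1 == 1%N].

Lemma goodP N j b w (X : 'I_N * {set 'I_N}) : goodX j b w X ->
  [/\ (X.1.+1 * j + \sum_(i in X.2) i.+1)%N = w,
      forall i, i \in X.2 -> (X.1 < i) && (odd i.+1 != odd X.1.+1) &
      odd #|X.2| = b].
Proof. by case/and3P => /eqP h1 /forall_inP h2 /eqP h3. Qed.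

Lemma goodI N j b w (s0 : 'I_N) (S0 : {set 'I_N}) :
  (s0.+1 * j + \sum_(i in S0) i.+1)%N = w ->
  (forall i : 'I_N, i \in S0 -> (s0 < i) && (odd i.+1 != odd s0.+1)) ->
  odd #|S0| = b -> goodX j b w (s0, S0).
Proof. by move=> h1 h2 h3; apply/and3P; split => //=; [apply/eqP | apply/forall_inP | apply/eqP]. Qed.

Lemma inDset n k (X : 'I_n.+1 * {set 'I_n.+1}) :
  (X \in Dset n k) = [&& nat_of_ord X.1 != 1%N, nat_of_ord X.1 != 0%N &
                       goodX k false n X || goodX k.+1 true n.+1 X].
Proof. by rewrite /Dset !in_setD !in_setU !memT !in_set. Qed.

Lemma DC n k : 0 < k -> #|Tset n.+1 k false (n - k.*2)| = #|Dset n k|.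
Proof.
move=> hk; apply: (@card_bij_in _ _ _ _ (@fD n) (@gD n)).
- move=> X; rewrite memT => /goodP [hw hS hpar].
  have h1 : X.1.+1 <= X.1.+1 * k by rewrite leq_pmulr.
  move: hw h1; set s := nat_of_ord X.1; set T := bigop _ _ _ => hw h1.
  have hs : s.+3 <= n by lia.
  have ha : (inord s.+1 : 'I_n.+1) = s.+1 :> nat by rewrite inordK //; lia.
  have hc : (inord s.+2 : 'I_n.+1) = s.+2 :> nat by rewrite inordK //; lia.
  have hS' : forall i : 'I_n.+1, i \in X.2 -> s < i /\ (odd i.+1 != odd s.+1).
    by move=> i /hS /andP [].
  rewrite /fD -/s; case: ifP => ha_in; rewrite inDset /= hc /=.
  + apply/orP; right; apply: goodI.
    * move: hw; rewrite /T (big_setD1 _ ha_in) /= ha hc; set U := bigop _ _ _; lia.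
    * move=> i; rewrite in_setD1 => /andP [ne iS]; case: (hS' i iS) => lt par.
      rewrite hc /=.
      have ne1 : nat_of_ord i != s.+1.
        by apply: contra ne => /eqP e; apply/eqP/val_inj; rewrite /= ha e.
      have ne2 : nat_of_ord i != s.+2.
        by apply: contra par => /eqP ->; rewrite /= negbK.
      apply/andP; split; first lia.
      by move: par; rewrite /= ?negbK.
    * move: hpar; rewrite (cardsD1 (inord s.+1)) ha_in /=; by case: (odd _).
  + apply/orP; left; apply: goodI => //.
    * rewrite hc -/T; lia.
    * move=> i iS; case: (hS' i iS) => lt par.
      rewrite hc /=.
      have ne1 : nat_of_ord i != s.+1.
        apply/negP => /eqP e; move: ha_in; suff -> : (inord s.+1 : 'I_n.+1) = i by rewrite iS.
        by apply/val_inj; rewrite /= ha e.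
      have ne2 : nat_of_ord i != s.+2.
        by apply: contra par => /eqP ->; rewrite /= negbK.
      apply/andP; split; first lia.
      by move: par; rewrite /= ?negbK.
- move=> Y; rewrite inDset => /and3P [h1 h0 hg].
  have hsn : nat_of_ord Y.1 <= n by rewrite -ltnS.
  move: h1 h0 hsn hg; set s := nat_of_ord Y.1 => h1 h0 hsn hg.
  have [s' es] : exists s', s = s'.+2 by exists (s - 2); lia.
  have hb : (inord (s - 1) : 'I_n.+1) = s'.+1 :> nat by rewrite inordK; lia.
  have hc : (inord (s - 2) : 'I_n.+1) = s' :> nat by rewrite inordK; lia.
  case/orP: hg => /goodP [hw hS hpar]; move: hw hS hpar; rewrite -/s => hw hS hpar;
    rewrite /gD hpar /= memT; apply: goodI.
  + rewrite hc; move: hw; set T := bigop _ _ _; rewrite es; lia.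
  + move=> i iS; case/andP: (hS i iS); rewrite hc -/s es /= => lt par.
    apply/andP; split; first lia.
    by move: par; rewrite ?negbK.
  + by [].
  + have hbn : (inord (s - 1) : 'I_n.+1) \notin Y.2.
      apply/negP => /hS /andP []; rewrite hb -/s es; lia.
    rewrite big_setU1 /=; last exact: hbn.
    rewrite hb hc; move: hw; set T := bigop _ _ _; rewrite es; lia.
  + move=> i; rewrite in_setU1 => /orP [/eqP -> | iS].
      by rewrite hb hc /= ltnSn /= negbK; case: (odd s').
    case/andP: (hS i iS); rewrite hc -/s es /= => lt par.
    apply/andP; split; first lia.
    by move: par; rewrite ?negbK.
  + have hbn : (inord (s - 1) : 'I_n.+1) \notin Y.2.
      apply/negP => /hS /andP []; rewrite hb -/s es; lia.
    by rewrite cardsU1 hbn /= hpar.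
- move=> X; rewrite memT => /goodP [hw hS hpar].
  have h1 : X.1.+1 <= X.1.+1 * k by rewrite leq_pmulr.
  move: hw h1 hS; set s := nat_of_ord X.1; set T := bigop _ _ _ => hw h1 hS.
  have hs : s.+3 <= n by lia.
  have ha : (inord s.+1 : 'I_n.+1) = s.+1 :> nat by rewrite inordK //; lia.
  have hc : (inord s.+2 : 'I_n.+1) = s.+2 :> nat by rewrite inordK //; lia.
  have e0 : (inord s : 'I_n.+1) = X.1 by apply: val_inj; rewrite /= inordK //; lia.
  rewrite /fD -/s [RHS]surjective_pairing; case: ifP => ha_in; rewrite /gD /=.
  + have -> : odd #|X.2 :\ inord s.+1| = true.
      by move: hpar; rewrite (cardsD1 (inord s.+1)) ha_in /=; case: (odd _).
    have e1 : (inord ((inord s.+2 : 'I_n.+1) - 2) : 'I_n.+1) = X.1.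
      apply: val_inj; rewrite /= hc inordK; [by rewrite subSS subSS subn0 | lia].
    have e2 : (inord ((inord s.+2 : 'I_n.+1) - 1) : 'I_n.+1) = inord s.+1.
      by apply: val_inj; rewrite /= hc.
    by rewrite e1 e2 setD1K.
  + have e1 : (inord ((inord s.+2 : 'I_n.+1) - 2) : 'I_n.+1) = X.1.
      apply: val_inj; rewrite /= hc inordK; [by rewrite subSS subSS subn0 | lia].
    by rewrite hpar e1.
- move=> Y; rewrite inDset => /and3P [h1 h0 hg].
  have hsn : nat_of_ord Y.1 <= n by rewrite -ltnS.
  move: h1 h0 hsn hg; set s := nat_of_ord Y.1 => h1 h0 hsn hg.
  have [s' es] : exists s', s = s'.+2 by exists (s - 2); lia.
  have hb : (inord (s - 1) : 'I_n.+1) = s'.+1 :> nat by rewrite inordK; lia.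
  have hc : (inord (s - 2) : 'I_n.+1) = s' :> nat by rewrite inordK; lia.
  have e0 : (inord s'.+2 : 'I_n.+1) = Y.1 by apply: val_inj; rewrite /= inordK; [by rewrite -es | lia].
  have eb : (inord s'.+1 : 'I_n.+1) = inord (s - 1) by apply: val_inj; rewrite /= hb inordK //; lia.
  rewrite [RHS]surjective_pairing.
  case/orP: hg => /goodP [hw hS hpar]; rewrite /gD hpar /fD /= hc eb e0.
  + have hbn : (inord (s - 1) : 'I_n.+1) \notin Y.2.
      apply/negP => /hS /andP []; rewrite hb -/s es; lia.
    by rewrite (negbTE hbn).
  + have hbn : (inord (s - 1) : 'I_n.+1) \notin Y.2.
      apply/negP => /hS /andP []; rewrite hb -/s es; lia.
    by rewrite setU11 setU1K.
Qed.


Definition U0 n k := Tset n.+1 k false n :|: Tset n.+1 k.+1 true n.+1.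
Definition Z0 n := [set X : 'I_n.+1 * {set 'I_n.+1} | val X.1 == 0%N].
Definition Z1 n := [set X : 'I_n.+1 * {set 'I_n.+1} | val X.1 == 1%N].

Lemma disjA n k : #|Tset n.+1 k false n :&: Tset n.+1 k.+1 true n.+1| = 0.
Proof.
apply/eqP; rewrite cards_eq0; apply/eqP/setP => X; rewrite in_set0 in_setI !memT.
by apply/negP => /andP [/goodP [_ _ h1] /goodP [_ _ h2]]; rewrite h1 in h2.
Qed.

Lemma Z1empty n k : odd n -> #|(U0 n k :\: Z0 n) :&: Z1 n| = 0.
Proof.
move=> hn; apply/eqP; rewrite cards_eq0; apply/eqP/setP => X.
rewrite in_set0 in_setI in_setD /U0 in_setU !memT !in_set.
apply/negP => /andP [/andP [_ hg] /eqP h1].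
have hev : forall i : 'I_n.+1, i \in X.2 -> (odd i.+1 != odd X.1.+1) -> ~~ odd i.
  by move=> i _; rewrite h1 /=; case: (odd i).
case/orP: hg => /goodP [hw hS hpar].
- have := sum_par (S := X.2) (fun i iS => hev i iS (proj2 (andP (hS i iS)))).
  rewrite hpar; move: hw; rewrite h1; set T := bigop _ _ _ => hw hT.
  have : odd n = odd (2 * k + T) by rewrite -hw.
  by rewrite oddD hT oddM /= hn.
- have := sum_par (S := X.2) (fun i iS => hev i iS (proj2 (andP (hS i iS)))).
  rewrite hpar; move: hw; rewrite h1; set T := bigop _ _ _ => hw hT.
  have : odd n.+1 = odd (2 * k.+1 + T) by rewrite -hw.
  by rewrite oddD hT oddM /= hn.
Qed.

Lemma Z0part n k : 0 < k ->
  #|U0 n k :&: Z0 n| = if k <= n then #|Pset n.+1 (n - k)| else 0.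
Proof.
move=> hk; case: leqP => hkn; last first.
  apply/eqP; rewrite cards_eq0; apply/eqP/setP => X.
  rewrite in_set0 in_setI /U0 in_setU !memT !in_set.
  apply/negP => /andP [hg /eqP h0].
  case/orP: hg => /goodP [hw _ _]; move: hw; rewrite h0; set T := bigop _ _ _; lia.
apply: (@card_bij_in _ _ _ _ (fun X => X.2) (fun S => (ord0, S))).
- move=> X; rewrite in_setI /U0 in_setU !memT !in_set => /andP [hg /eqP h0].
  have h0' : nat_of_ord X.1 = 0 := h0.
  case/orP: hg => /goodP [hw hS _]; move: hw hS; rewrite h0'; set T := bigop _ _ _ => hw hS;
    (apply/andP; split; [apply/eqP; rewrite /T; lia | apply/forall_inP => i /hS /andP [_] /=; by case: (odd (nat_of_ord i))]).
- move=> S; rewrite in_set => /andP [/eqP hw /forall_inP hS].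
  rewrite in_setI /U0 in_setU !memT !in_set /= andbT.
  have hel : forall i : ordinal n.+1, i \in S -> (@ord0 n < i) && (odd i.+1 != odd (@ord0 n).+1).
    move=> i iS; have hi := hS i iS; rewrite /= hi andbT; by case: (nat_of_ord i) hi.
  case hp: (odd #|S|).
  + apply/orP; right; apply: goodI => //; rewrite /= hw; lia.
  + apply/orP; left; apply: goodI => //; rewrite /= hw; lia.
- move=> X /setIP [_]; rewrite in_set => /eqP h0.
  by rewrite [RHS]surjective_pairing; congr (_, _); apply: val_inj; rewrite /= h0.
- by [].
Qed.

Lemma main_nat n k : 0 < k -> odd n ->
  #|Tset n.+1 k false n| + #|Tset n.+1 k.+1 true n.+1| =
  #|Tset n.+1 k false (n - k.*2)| + (if k <= n then #|Pset n.+1 (n - k)| else 0).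
Proof.
move=> hk hn.
have := cardsU (Tset n.+1 k false n) (Tset n.+1 k.+1 true n.+1).
rewrite disjA subn0 => <-.
rewrite -/(U0 n k) -(cardsID (Z0 n) (U0 n k)) -(cardsID (Z1 n) (U0 n k :\: Z0 n)).
rewrite Z1empty // add0n DC // Z0part // addnC.
by [].
Qed.

Lemma Tset0 N j b : 0 < j -> #|Tset N j b 0| = 0.
Proof.
move=> hj; apply/eqP; rewrite cards_eq0; apply/eqP/setP => X.
rewrite in_set0 memT; apply/negP => /goodP [hw _ _].
move: hw; set T := bigop _ _ _; set s := nat_of_ord _.
have : s.+1 <= s.+1 * j by rewrite leq_pmulr.
lia.
Qed.


Unset Implicit Arguments.
Import GRing.Theory Num.Theory.
Local Open Scope ring_scope.

Theorem lemma3 (k t : nat) (hk : (1 <= k)%N) (ht : (1 <= t)%N) :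
  (B0 k (2 * t%:Z - 1) + B1 k.+1 (2 * t%:Z))%N =
  (B0 k (2 * t%:Z - 2 * k%:Z - 1) + pde (2 * t%:Z - k%:Z - 1))%N.
Proof.
set n := (2 * t - 1)%N.
have hn : odd n.
  have -> : n = ((t - 1).*2).+1 by rewrite /n; lia.
  by rewrite /= odd_double.
have e1 : 2 * t%:Z - 1 = Posz n by rewrite /n; lia.
have e2 : 2 * t%:Z = Posz n.+1 by rewrite /n; lia.
rewrite e1 e2 /B0 /B1 /pde.
rewrite (@Bnat_T n) // (@Bnat_T n) // main_nat //.
congr (_ + _)%N.
- case: (ltnP k t) => hkt.
    have e3 : (Posz n.+1) - 2 * k%:Z - 1 = Posz (n - k.*2)%N by rewrite /n; lia.
    by rewrite e3 (@Bnat_T n) //; lia.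
  have e3 : (Posz n.+1) - 2 * k%:Z - 1 = - Posz (2 * k - 2 * t + 1)%N by lia.
  have -> : (n - k.*2 = 0)%N by rewrite /n; lia.
  by rewrite e3 addn1 /= Tset0.
- case: leqP => hkn.
    have e3 : (Posz n.+1) - k%:Z - 1 = Posz (n - k)%N by rewrite /n; lia.
    by rewrite e3 (@pde_P n) //; lia.
  have e3 : (Posz n.+1) - k%:Z - 1 = - Posz (k - 2 * t)%N.+1 by rewrite /n in hkn; lia.
  by rewrite e3.
Qed.
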